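(* Let $k,l\ge 1$ and let $V'(k,l)=\{x_1,\dots,x_k\}\times\{y_1,\dots,y_l\}$ with $x_1<\dots<x_k$ and $y_1<\dots<y_l$ real numbers. Let $S$ be a finite set of closed line segments in the plane, none of which is horizontal or vertical, whose union contains $V'(k,l)$. Then $|S|\ge k+l-2$. Moreover, if $k=1$ or $l=1$, or if $S$ is noncrossing, then $|S|\ge k+l-1$.
   Context: Segments are nondegenerate (positive length); a segment is horizontal (vertical) if its endpoints have equal $y$- (resp. $x$-) coordinates. A set of segments is noncrossing if any two of its segments intersect at most in a point that is a common endpoint of both. *)

(* Defs.v *)
From HB Require Import structures.
From mathcomp Require Import all_boot all_order all_algebra.
Set Implicit Arguments. Unset Strict Implicit. Unset Printing Implicit Defensive.
Import Order.TTheory GRing.Theory Num.Theory.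
Local Open Scope ring_scope.

Definition point (R : realFieldType) : Type := (R * R)%type.

Definition segment (R : realFieldType) : Type := (point R * point R)%type.

Definition on_seg (R : realFieldType) (u : segment R) (p : point R) : Prop :=
  exists2 t : R, 0 <= t <= 1 &
    p = (u.1.1 + t * (u.2.1 - u.1.1), u.1.2 + t * (u.2.2 - u.1.2)).

Definition non_axis (R : realFieldType) (u : segment R) : bool :=
  (u.1.1 != u.2.1) && (u.1.2 != u.2.2).

Definition is_endpoint (R : realFieldType) (u : segment R) (p : point R) : bool :=
  (p == u.1) || (p == u.2).

Definition same_seg (R : realFieldType) (u v : segment R) : bool :=
  ((u.1 == v.1) && (u.2 == v.2)) || ((u.1 == v.2) && (u.2 == v.1)).

Definition cross_free (R : realFieldType) (u v : segment R) : Prop :=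
  forall p : point R, on_seg u p -> on_seg v p ->
    is_endpoint u p && is_endpoint v p.

(* A family of segments (listed without repetition) is noncrossing. *)
Definition noncrossing (R : realFieldType) (s : seq (segment R)) : Prop :=
  forall (s1 s2 s3 : seq (segment R)) (u v : segment R),
    s = s1 ++ u :: s2 ++ v :: s3 -> cross_free u v.

(* Main.v *)
Require Import Defs.
From HB Require Import structures.
From mathcomp Require Import all_boot all_order all_algebra.
From mathcomp Require Import ring lra zify.
Import Order.TTheory GRing.Theory Num.Theory.
Local Open Scope ring_scope.
Set Implicit Arguments. Unset Strict Implicit. Unset Printing Implicit Defensive.

Lemma dcount (U : eqType) (T : finType) (A : {set T}) (P : U -> T -> bool) (S : seq U) :
  (\sum_(a in A) count (P^~ a) S = \sum_(u <- S) #|[set a in A | P u a]|)%N.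
Proof.
elim: S => [|u S IH]; first by rewrite big_nil big1.
rewrite big_cons /= big_split /= IH; congr (_ + _)%N.
rewrite -sum1dep_card big_mkcond /= [RHS]big_mkcond /=.
apply: eq_bigr => a _; by case: (a \in A); case: (P u a).
Qed.

Lemma count_bound (U : eqType) (T : finType) (A : {set T}) (P : U -> T -> bool) (S : seq U) c :
  (forall a, a \in A -> has (P^~ a) S) ->
  (forall u, u \in S -> #|[set a in A | P u a]| <= c)%N ->
  (#|A| <= c * size S)%N.
Proof.
move=> hc hb.
apply: (@leq_trans (\sum_(a in A) count (P^~ a) S)).
  rewrite -sum1_card; apply: leq_sum => a /hc; by rewrite has_count.
rewrite dcount.
elim: S hb {hc} => [|u S IH] hb; first by rewrite big_nil.
rewrite big_cons /= mulnS leq_add //.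
  by apply: hb; rewrite inE eqxx.
by apply: IH => v hv; apply: hb; rewrite inE hv orbT.
Qed.

Definition ptn (R : realFieldType) (u : segment R) (t : R) : R * R :=
  (u.1.1 + t * (u.2.1 - u.1.1), u.1.2 + t * (u.2.2 - u.1.2)).
Definition prm (R : realFieldType) (u : segment R) (p : R * R) : R :=
  (p.1 - u.1.1) / (u.2.1 - u.1.1).
Definition onb (R : realFieldType) (u : segment R) (p : R * R) : bool :=
  (0 <= prm u p <= 1) && (p == ptn u (prm u p)).

Lemma prm_ptn (R : realFieldType) (u : segment R) t : u.1.1 != u.2.1 -> prm u (ptn u t) = t.
Proof.
move=> h; rewrite /prm /ptn /=. field. by rewrite subr_eq0 eq_sym.
Qed.

Lemma onbP (R : realFieldType) (u : segment R) p : u.1.1 != u.2.1 ->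
  reflect (on_seg u p) (onb u p).
Proof.
move=> h; apply: (iffP andP).
  by case=> h1 /eqP h2; exists (prm u p).
by case=> t ht ->; rewrite prm_ptn //; split.
Qed.

Lemma ptn_inj (R : realFieldType) (u : segment R) t1 t2 : u.1.1 != u.2.1 ->
  ptn u t1 = ptn u t2 -> t1 = t2.
Proof. by move=> h e; rewrite -(prm_ptn t1 h) e prm_ptn. Qed.

Lemma ptn_x (R : realFieldType) (u : segment R) t1 t2 : u.1.1 != u.2.1 ->
  (ptn u t1).1 = (ptn u t2).1 -> t1 = t2.
Proof.
move=> h /= e. have : (t1 - t2) * (u.2.1 - u.1.1) = 0.
  by rewrite mulrBl; apply/eqP; rewrite subr_eq0; apply/eqP; lra.
have h' : u.2.1 - u.1.1 != 0 by rewrite subr_eq0 eq_sym.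
by move/eqP; rewrite mulf_eq0 (negbTE h') orbF subr_eq0 => /eqP.
Qed.

Lemma ptn_y (R : realFieldType) (u : segment R) t1 t2 : u.1.2 != u.2.2 ->
  (ptn u t1).2 = (ptn u t2).2 -> t1 = t2.
Proof.
move=> h /= e. have : (t1 - t2) * (u.2.2 - u.1.2) = 0.
  by rewrite mulrBl; apply/eqP; rewrite subr_eq0; apply/eqP; lra.
have h' : u.2.2 - u.1.2 != 0 by rewrite subr_eq0 eq_sym.
by move/eqP; rewrite mulf_eq0 (negbTE h') orbF subr_eq0 => /eqP.
Qed.

Lemma onb_ptn (R : realFieldType) (u : segment R) p : onb u p -> p = ptn u (prm u p).
Proof. by case/andP=> _ /eqP. Qed.

Lemma onb_prm (R : realFieldType) (u : segment R) p : onb u p -> 0 <= prm u p <= 1.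
Proof. by case/andP. Qed.

Lemma mid1 (R : realFieldType) (a d t1 t2 t3 X0 X1 : R) : d != 0 -> t1 < t2 -> t2 < t3 ->
  X0 <= a + t1 * d <= X1 -> X0 <= a + t3 * d <= X1 ->
  (a + t2 * d == X0) || (a + t2 * d == X1) -> False.
Proof.
move=> hd h12 h23 /andP[h1 h1'] /andP[h3 h3'].
have hp : 0 < (t2 - t1) * (t3 - t2) * (d * d).
  apply: mulr_gt0; first by rewrite mulr_gt0 // subr_gt0.
  by rewrite -expr2 exprn_even_gt0 // hd orbT.

have e1 : (a + t2 * d - (a + t1 * d)) * (a + t3 * d - (a + t2 * d)) =
   (t2 - t1) * (t3 - t2) * (d * d) by ring.
case/orP => /eqP e; rewrite e in e1; nra.
Qed.

Definition incr (R : realFieldType) n (x : 'I_n -> R) :=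
  forall i j : 'I_n, (i < j)%N -> x i < x j.

Lemma incr_le (R : realFieldType) n (x : 'I_n -> R) : incr x ->
  forall i j : 'I_n, (i <= j)%N -> x i <= x j.
Proof.
move=> h i j; rewrite leq_eqVlt => /orP[/eqP e|/h/ltW //].
by have -> : i = j by apply: val_inj.
Qed.

Lemma incr_lt (R : realFieldType) n (x : 'I_n -> R) : incr x ->
  forall i j : 'I_n, x i < x j -> (i < j)%N.
Proof.
move=> h i j hx; case: (ltnP i j) => // hji.
by have := incr_le h hji; rewrite leNgt hx.
Qed.

Lemma incr_inj (R : realFieldType) n (x : 'I_n -> R) : incr x ->
  forall i j : 'I_n, x i = x j -> i = j.
Proof.
move=> h i j e; case: (ltngtP i j) => hij.
- by have := h _ _ hij; rewrite e ltxx.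
- by have := h _ _ hij; rewrite e ltxx.
- exact: val_inj.
Qed.

Definition bnd k l (p : 'I_k.+1 * 'I_l.+1) : bool :=
  [|| p.1 == ord0, p.1 == ord_max, p.2 == ord0 | p.2 == ord_max].

Lemma mid_bnd (R : realFieldType) k l (x : 'I_k.+1 -> R) (y : 'I_l.+1 -> R)
  (u : segment R) (pa pb pc : 'I_k.+1 * 'I_l.+1) ta tb tc :
  incr x -> incr y -> non_axis u -> ta < tb -> tb < tc ->
  (x pa.1, y pa.2) = ptn u ta -> (x pb.1, y pb.2) = ptn u tb ->
  (x pc.1, y pc.2) = ptn u tc -> bnd pb -> False.
Proof.
move=> hx hy /andP[hux huy] hab hbc ea eb ec.
have xa := congr1 fst ea; have xb := congr1 fst eb; have xc := congr1 fst ec.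
have ya := congr1 snd ea; have yb := congr1 snd eb; have yc := congr1 snd ec.
rewrite /= in xa xb xc ya yb yc.
have dx : u.2.1 - u.1.1 != 0 by rewrite subr_eq0 eq_sym.
have dy : u.2.2 - u.1.2 != 0 by rewrite subr_eq0 eq_sym.
have bx (i : 'I_k.+1) : x ord0 <= x i <= x ord_max.
  by rewrite !(incr_le hx) // -ltnS ltn_ord.
have by_ (i : 'I_l.+1) : y ord0 <= y i <= y ord_max.
  by rewrite !(incr_le hy) // -ltnS ltn_ord.
have HX : (x pb.1 == x ord0) || (x pb.1 == x ord_max) -> False.
  rewrite xb => H.
  apply: (mid1 dx hab hbc _ _ H); by rewrite -?xa -?xc.
have HY : (y pb.2 == y ord0) || (y pb.2 == y ord_max) -> False.
  rewrite yb => H.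
  apply: (mid1 dy hab hbc _ _ H); by rewrite -?ya -?yc.
by case/or4P => /eqP e; [apply: HX; rewrite e eqxx | apply: HX; rewrite e eqxx orbT
  | apply: HY; rewrite e eqxx | apply: HY; rewrite e eqxx orbT].
Qed.

Lemma ptinj (R : realFieldType) k l (x : 'I_k.+1 -> R) (y : 'I_l.+1 -> R)
  (p q : 'I_k.+1 * 'I_l.+1) : incr x -> incr y ->
  (x p.1, y p.2) = (x q.1, y q.2) -> p = q.
Proof.
move=> hx hy [e1 e2]; case: p q e1 e2 => [a b] [c d] /= e1 e2.
by rewrite (incr_inj hx e1) (incr_inj hy e2).
Qed.

Lemma two_bnd (R : realFieldType) k l (x : 'I_k.+1 -> R) (y : 'I_l.+1 -> R)
  (u : segment R) : incr x -> incr y -> non_axis u ->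
  (#|[set p in [set p | bnd p] | onb u (x p.1, y p.2)]| <= 2)%N.
Proof.
move=> hx hy hu; rewrite leqNgt; apply/negP.
move=> /card_gt2P [p1 [p2 [p3 [[h1 h2 h3] [n12 n23 n31]]]]].
move: h1 h2 h3; rewrite !inE => /andP[b1 o1] /andP[b2 o2] /andP[b3 o3].
have [t1 e1] : exists t, (x p1.1, y p1.2) = ptn u t := ex_intro _ _ (onb_ptn o1).
have [t2 e2] : exists t, (x p2.1, y p2.2) = ptn u t := ex_intro _ _ (onb_ptn o2).
have [t3 e3] : exists t, (x p3.1, y p3.2) = ptn u t := ex_intro _ _ (onb_ptn o3).
have d12 : t1 != t2.
  by apply/eqP => e; apply: (negP n12); apply/eqP; apply: (ptinj hx hy); rewrite e1 e2 e.
have d23 : t2 != t3.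
  by apply/eqP => e; apply: (negP n23); apply/eqP; apply: (ptinj hx hy); rewrite e2 e3 e.
have d31 : t3 != t1.
  by apply/eqP => e; apply: (negP n31); apply/eqP; apply: (ptinj hx hy); rewrite e3 e1 e.
move: d12 d23 d31; rewrite !neq_lt => /orP[] ? /orP[] ? /orP[] ?;
 first [ by apply: (mid_bnd hx hy hu _ _ e1 e2 e3 b2)
       | by apply: (mid_bnd hx hy hu _ _ e3 e2 e1 b2)
       | by apply: (mid_bnd hx hy hu _ _ e2 e3 e1 b3)
       | by apply: (mid_bnd hx hy hu _ _ e1 e3 e2 b3)
       | by apply: (mid_bnd hx hy hu _ _ e2 e1 e3 b1)
       | by apply: (mid_bnd hx hy hu _ _ e3 e1 e2 b1)
       | lra ].
Qed.

Lemma col_one (R : realFieldType) l (x0 : R) (y : 'I_l -> R) (u : segment R)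
  (A : {set 'I_l}) : incr y -> non_axis u ->
  (#|[set j in A | onb u (x0, y j)]| <= 1)%N.
Proof.
move=> hy /andP[hux huy]; apply/card_le1_eqP => j1 j2; rewrite !inE.
move=> /andP[_ /onb_ptn e1] /andP[_ /onb_ptn e2].
have ex : (ptn u (prm u (x0, y j1))).1 = (ptn u (prm u (x0, y j2))).1 :=
  etrans (esym (congr1 fst e1)) (congr1 fst e2).
have et := ptn_x hux ex.
have : (x0, y j1) = (x0, y j2) by rewrite [LHS]e1 [RHS]e2 et.
by move=> /(congr1 snd) /= /(incr_inj hy).
Qed.

Lemma row_one (R : realFieldType) k (y0 : R) (x : 'I_k -> R) (u : segment R)
  (A : {set 'I_k}) : incr x -> non_axis u ->
  (#|[set i in A | onb u (x i, y0)]| <= 1)%N.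
Proof.
move=> hx /andP[hux huy]; apply/card_le1_eqP => j1 j2; rewrite !inE.
move=> /andP[_ /onb_ptn e1] /andP[_ /onb_ptn e2].
have ex : (ptn u (prm u (x j1, y0))).2 = (ptn u (prm u (x j2, y0))).2 :=
  etrans (esym (congr1 snd e1)) (congr1 snd e2).
have et := ptn_y huy ex.
have : (x j1, y0) = (x j2, y0) by rewrite [LHS]e1 [RHS]e2 et.
by move=> /(congr1 fst) /= /(incr_inj hx).
Qed.

Lemma card_bnd k l : (0 < k)%N -> (0 < l)%N ->
  (2 * (k + l) <= #|[set p : 'I_k.+1 * 'I_l.+1 | bnd p]|)%N.
Proof.
move=> hk hl.
have hC : forall n, (0 < n)%N -> #|~: [set (ord0 : 'I_n.+1); ord_max]| = n.-1.
  move=> n hn; have := cardsC [set (ord0 : 'I_n.+1); ord_max].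
  rewrite cards2 (card_ord n.+1).
  have -> : (ord0 : 'I_n.+1) != ord_max by rewrite -(inj_eq val_inj) /= eq_sym -lt0n.
  move=> e; lia.
have sub : ~: [set p : 'I_k.+1 * 'I_l.+1 | bnd p] \subset
   setX (~: [set (ord0 : 'I_k.+1); ord_max]) (~: [set (ord0 : 'I_l.+1); ord_max]).
  apply/subsetP => -[a b]; rewrite !inE /bnd /= !negb_or.
  by case/and4P => -> -> -> ->.
have := subset_leq_card sub; rewrite cardsX !hC //.
have := cardsC [set p : 'I_k.+1 * 'I_l.+1 | bnd p].
rewrite card_prod !card_ord => e h.
have : (#|~: [set p : 'I_k.+1 * 'I_l.+1 | bnd p]| <= (k - 1) * (l - 1))%N.
  by move: h; rewrite !subn1.
move: e; nia.
Qed.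

Lemma extremal (R : realFieldType) (ta tp s : R) : 0 <= ta <= 1 -> 0 <= tp <= 1 ->
  ta != tp -> 0 <= s <= 1 ->
  (ta + s * (tp - ta) = 0) \/ (ta + s * (tp - ta) = 1) -> s = 0 \/ s = 1.
Proof.
move=> /andP[a0 a1] /andP[p0 p1] hne /andP[s0 s1] H.
case: (eqVneq s 0) => [->|h0]; first by left.
case: (eqVneq s 1) => [->|h1]; first by right.
have s0' : 0 < s by rewrite lt_def h0 s0.
have s1' : s < 1 by rewrite lt_def eq_sym h1 s1.
exfalso; move: hne; rewrite neq_lt => /orP[] h; case: H => H; nra.
Qed.

Lemma cross1 (R : realFieldType) (x0 XP XQ ya yb YP YQ : R) :
  x0 < XP -> XP <= XQ -> ya < yb -> yb <= YP -> YQ <= yb ->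
  exists sA sB, [/\ 0 <= sA <= 1, 0 <= sB <= 1,
    x0 + sA * (XP - x0) = x0 + sB * (XQ - x0) &
    ya + sA * (YP - ya) = yb + sB * (YQ - yb)].
Proof.
move=> h1 h2 h3 h4 h5.
have hQ : 0 < XQ - x0 by lra.
set r := (XP - x0) / (XQ - x0).
have r0 : 0 <= r by rewrite divr_ge0 //; lra.
have r1 : r <= 1 by rewrite ler_pdivrMr // mul1r; lra.
have hr : r * (XQ - x0) = XP - x0 by rewrite /r; field; lra.
set c := YP - ya - r * (YQ - yb).
have hc' : yb - ya <= c.
  rewrite /c; have : 0 <= r * (yb - YQ) by rewrite mulr_ge0 //; lra.
  lra.
have hc : 0 < c by lra.
set sA := (yb - ya) / c.
have sA0 : 0 <= sA by rewrite divr_ge0 //; lra.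
have sA1 : sA <= 1 by rewrite ler_pdivrMr // mul1r.
have hsA : sA * c = yb - ya by rewrite /sA; field; lra.
exists sA, (sA * r); split.
- by rewrite sA0 sA1.
- by rewrite mulr_ge0 //= mulr_ile1.
- by rewrite -(mulrA sA) hr.
- have : sA * (YP - ya) - sA * r * (YQ - yb) = sA * c by rewrite /c; ring.
  rewrite hsA; lra.
Qed.

Lemma cross2 (R : realFieldType) (x0 XP XQ ya yb YP YQ : R) :
  x0 < XP -> x0 < XQ -> ya < yb -> yb <= YP -> YQ <= ya ->
  exists sA sB, [/\ 0 <= sA <= 1, 0 <= sB <= 1,
    x0 + sA * (XP - x0) = x0 + sB * (XQ - x0) &
    ya + sA * (YP - ya) = yb + sB * (YQ - yb)].
Proof.
move=> h1 h2 h3 h4 h5.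
case: (lerP XP XQ) => h.
  by apply: cross1 => //; lra.
have [sB [sA [hb ha ex ey]]] :
  exists sA sB, [/\ 0 <= sA <= 1, 0 <= sB <= 1,
    x0 + sA * (XQ - x0) = x0 + sB * (XP - x0) &
    - yb + sA * (- YQ - - yb) = - ya + sB * (- YP - - ya)].
  by apply: cross1 => //; lra.
exists sA, sB; split => //; lra.
Qed.

Lemma count2 (T : eqType) (Q : pred T) (s : seq T) a b :
  a \in s -> b \in s -> a != b -> Q a -> Q b -> (1 < count Q s)%N.
Proof.
elim: s => [//|u s IH]; rewrite !inE => ha hb hab qa qb /=.
case: (eqVneq a u) => [e|hau].
  subst u; have hbs : b \in s.
    by case/orP: hb => // /eqP e; rewrite e eqxx in hab.
  by rewrite qa add1n ltnS -has_count; apply/hasP; exists b.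
case: (eqVneq b u) => [e|hbu].
  subst u; have has : a \in s by rewrite (negbTE hau) in ha.
  by rewrite qb add1n ltnS -has_count; apply/hasP; exists a.
rewrite (negbTE hau) in ha; rewrite (negbTE hbu) in hb.
by apply: (leq_trans (IH ha hb hab qa qb)); rewrite leq_addl.
Qed.

Lemma nc_pair (R : realFieldType) (S : seq (segment R)) A B :
  noncrossing S -> A \in S -> B \in S -> A != B ->
  forall z, on_seg A z -> on_seg B z -> is_endpoint A z && is_endpoint B z.
Proof.
move=> hnc hA; move: hnc; case/splitPr: hA => s1 s2 hnc.
rewrite mem_cat inE => hB hAB z hzA hzB.
case/or3P: hB => [hB|/eqP e|hB].
- move: hnc; case/splitPr: hB => s3 s4 hnc.
  have := hnc s3 s4 s2 B A; rewrite -catA /= => /(_ erefl z hzB hzA).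
  by rewrite andbC.
- by rewrite e eqxx in hAB.
- move: hnc; case/splitPr: hB => s3 s4 hnc.
  exact: (hnc s1 s3 s4 A B erefl z hzA hzB).
Qed.

Lemma sum_le2 (T : eqType) (f : T -> nat) (s : seq T) :
  (forall u, u \in s -> f u <= 2)%N -> (\sum_(u <- s) f u <= 2 * size s)%N.
Proof.
elim: s => [|w s' IH'] hb; first by rewrite big_nil.
rewrite big_cons /= mulnS leq_add //; first by apply: hb; rewrite !inE eqxx.
by apply: IH' => v hv; apply: hb; rewrite !inE hv !orbT.
Qed.

Lemma sum_lt2 (T : eqType) (f : T -> nat) (s : seq T) u0 :
  (forall u, u \in s -> f u <= 2)%N -> u0 \in s -> (f u0 <= 1)%N ->
  (\sum_(u <- s) f u < 2 * size s)%N.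
Proof.
elim: s => [//|u s IH] hb; rewrite inE big_cons /= => /orP[/eqP<-|h] h0.
  have := sum_le2 (fun v (hv : v \in s) => hb v (@mem_behead _ (u :: s) v hv)).
  move=> /= H; rewrite mulnS; lia.
have := IH (fun v (hv : v \in s) => hb v (@mem_behead _ (u :: s) v hv)) h h0.
have := hb u (mem_head _ _).
move=> /= H1 H2; rewrite mulnS; lia.
Qed.

Lemma sum_gt (T : finType) (A : {set T}) (c : T -> nat) p0 :
  (forall p, p \in A -> 0 < c p)%N -> p0 \in A -> (1 < c p0)%N ->
  (#|A| < \sum_(p in A) c p)%N.
Proof.
move=> h1 hp0 h2.
apply: (@leq_trans (\sum_(p in A) (1 + (p == p0)))).
  rewrite big_split /= sum1_card (bigD1 p0) //= eqxx big1 ?addn0 ?addn1 //.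
  by move=> p /andP[_ /negbTE ->].
apply: leq_sum => p hp; case: (eqVneq p p0) => [->|_] //.
by rewrite addn0; apply: h1.
Qed.

Lemma other_pt (T : finType) (A : {pred T}) a :
  (1 < #|A|)%N -> exists2 b, b \in A & b != a.
Proof.
case/card_gt1P => p [q [hp hq hpq]].
case: (eqVneq p a) => [e|]; last by exists p.
by exists q => //; rewrite -e eq_sym.
Qed.

Lemma switch (P : nat -> bool) n : P 0%N -> ~~ P n ->
  exists j, [/\ (j < n)%N, P j & ~~ P j.+1].
Proof.
elim: n => [->//|n IH] h0 hn.
case: (boolP (P n)) => hPn; first by exists n.
by have [j [hj ? ?]] := IH h0 hPn; exists j; split => //; rewrite ltnS ltnW.
Qed.

Definition dxdy (R : realFieldType) (u : segment R) := (u.2.1 - u.1.1) * (u.2.2 - u.1.2).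

Lemma seg_sub (R : realFieldType) (u : segment R) (a1 a2 b1 b2 s : R) :
  non_axis u -> onb u (a1, a2) -> onb u (b1, b2) -> (a1, a2) != (b1, b2) ->
  0 <= s <= 1 ->
  on_seg u (a1 + s * (b1 - a1), a2 + s * (b2 - a2)) /\
  (is_endpoint u (a1 + s * (b1 - a1), a2 + s * (b2 - a2)) -> s = 0 \/ s = 1).
Proof.
move=> /andP[hux huy] oa ob hab hs.
have ta01 := onb_prm oa; have tb01 := onb_prm ob.
move: (onb_ptn oa) (onb_ptn ob) hab.
move: (prm u (a1, a2)) (prm u (b1, b2)) ta01 tb01 => ta tb ta01 tb01 ea eb hab.
have htab : ta != tb by apply: contraNneq hab => e; rewrite ea eb e.
case: ea => ea1 ea2; case: eb => eb1 eb2.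
have ez : (a1 + s * (b1 - a1), a2 + s * (b2 - a2)) = ptn u (ta + s * (tb - ta)).
  rewrite /ptn ea1 ea2 eb1 eb2 /=; congr (_, _); ring.
rewrite ez; split.
  exists (ta + s * (tb - ta)) => //.
  case/andP: ta01 => ? ?; case/andP: tb01 => ? ?; case/andP: hs => ? ?.
  apply/andP; split; nra.
move=> he; apply: (extremal ta01 tb01 htab hs).
have e0 : u.1 = ptn u 0 by rewrite /ptn !mul0r !addr0; case: (u.1).
have e1 : u.2 = ptn u 1.
  by rewrite /ptn !mul1r [u.1.1 + _]addrC subrK [u.1.2 + _]addrC subrK; case: (u.2).
case/orP: he => /eqP; [rewrite e0 | rewrite e1] => /(ptn_inj hux); by [left|right].
Qed.

Lemma left_sign (R : realFieldType) k l (x : 'I_k.+1 -> R) (y : 'I_l.+1 -> R)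
  (u : segment R) (j : 'I_l.+1) (p : 'I_k.+1 * 'I_l.+1) :
  incr x -> incr y -> non_axis u -> onb u (x ord0, y j) -> onb u (x p.1, y p.2) ->
  p != (ord0, j) ->
  [/\ x ord0 < x p.1, y p.2 != y j &
     exists2 q, 0 < q & (x p.1 - x ord0) * (y p.2 - y j) = q * dxdy u].
Proof.
move=> hx hy hu oa op hne; have /andP[hux huy] := hu.
move: (onb_ptn oa) (onb_ptn op).
move: (prm u (x ord0, y j)) (prm u (x p.1, y p.2)) => ta tp ea ep.
have htp : tp != ta.
  apply: contraNneq hne => e; apply/eqP; apply: (ptinj hx hy); by rewrite /= ep ea e.
have hxne : x p.1 != x ord0.
  apply: contraNneq htp => e; apply/eqP; apply: (ptn_x hux).
  by rewrite -(congr1 fst ep) -(congr1 fst ea) /= e.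
have hyne : y p.2 != y j.
  apply: contraNneq htp => e; apply/eqP; apply: (ptn_y huy).
  by rewrite -(congr1 snd ep) -(congr1 snd ea) /= e.
split => //.
  have : p.1 != ord0 by apply: contraNneq hxne => ->.
  rewrite -(inj_eq val_inj) /= -lt0n => h0.
  exact: hx.
exists ((tp - ta) * (tp - ta)).
  by rewrite -expr2 exprn_even_gt0 //= subr_eq0 htp.
have ex := congr1 fst ep; have ex' := congr1 fst ea.
have ey := congr1 snd ep; have ey' := congr1 snd ea.
rewrite /= in ex ex' ey ey'.
rewrite ex ex' ey ey' /dxdy; ring.
Qed.

Lemma lin0 (R : realFieldType) (a b : R) : a + 0 * (b - a) = a.
Proof. by rewrite mul0r addr0. Qed.
Lemma lin1 (R : realFieldType) (a b : R) : a + 1 * (b - a) = b.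
Proof. by rewrite mul1r addrC subrK. Qed.

Lemma nc_main (R : realFieldType) k l (x : 'I_k.+1 -> R) (y : 'I_l.+1 -> R)
  (S : seq (segment R)) :
  (0 < k)%N -> (0 < l)%N -> incr x -> incr y ->
  (forall u, u \in S -> non_axis u) ->
  (forall i j, has (fun u => onb u (x i, y j)) S) ->
  noncrossing S -> (size S <= k + l)%N -> False.
Proof.
move=> hk hl hx hy hS hcov hnc hsz.
have cB := card_bnd hk hl.
set Bs := [set p : 'I_k.+1 * 'I_l.+1 | bnd p].
set P := fun u (p : 'I_k.+1 * 'I_l.+1) => onb u (x p.1, y p.2).
have dc := dcount Bs P S.
have lo : (#|Bs| <= \sum_(p in Bs) count (P^~ p) S)%N.
  rewrite -sum1_card; apply: leq_sum => p _; rewrite -has_count; exact: hcov.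
have h4 : (2 * size S <= #|Bs|)%N := leq_trans (leq_mul (leqnn 2) hsz) cB.
have lo' := leq_trans lo (eq_leq dc).
have E1 : forall u, u \in S -> (1 < #|[set p in Bs | P u p]|)%N.
  move=> u hu; rewrite ltnNge; apply/negP => h.
  have H := sum_lt2 (f := fun u => #|[set p in Bs | P u p]|)
     (fun v hv => two_bnd hx hy (hS v hv)) hu h.
  have := leq_ltn_trans h4 (leq_ltn_trans lo' H); by rewrite ltnn.
have pos : forall q, q \in Bs -> (0 < count (P^~ q) S)%N.
  by move=> q _; rewrite -has_count; exact: hcov.
have E2 : forall p, p \in Bs -> (count (P^~ p) S <= 1)%N.
  move=> p hp; rewrite leqNgt; apply/negP => h.
  have H1 := sum_gt (c := fun p => count (P^~ p) S) pos hp h.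
  have H2 := sum_le2 (f := fun u => #|[set p in Bs | P u p]|)
     (fun v hv => two_bnd hx hy (hS v hv)).
  have := leq_trans (leq_trans H1 (eq_leq dc)) (leq_trans H2 h4).
  by rewrite ltnn.
have oth : forall u j, u \in S -> P u (ord0, j) ->
    exists2 p, p \in Bs & P u p && (p != (ord0, j)).
  move=> u j hu hP.
  have [p hp hne] := other_pt (ord0, j) (E1 u hu).
  move: hp; rewrite inE => /andP[hb hP'].
  by exists p => //; rewrite hP' hne.
have bs0 : forall j, (ord0, j) \in Bs by move=> j; rewrite inE /bnd eqxx.
set Q := fun n => (n < l.+1)%N &&
   has (fun u => P u (ord0, inord n) && (0 < dxdy u)) S.
have Q0 : Q 0%N.
  rewrite /Q /=; have /hasP [u hu hPu] := hcov ord0 ord0.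
  apply/hasP; exists u => //.
  have e : (inord 0 : 'I_l.+1) = ord0 by apply: val_inj; rewrite /= inordK.
  rewrite e; apply/andP; split => //.
  have [p _ /andP[hPp hne]] := oth u ord0 hu hPu.
  have [h1 h2 [q hq hid]] := left_sign hx hy (hS u hu) hPu hPp hne.
  have h3 : y ord0 < y p.2.
    by rewrite lt_def h2 /= (incr_le hy).
  nra.
have Ql : ~~ Q l.
  rewrite /Q ltnSn /=; apply/hasPn => u hu; apply/negP => /andP[hPu hpos].
  have e : (inord l : 'I_l.+1) = ord_max by apply: val_inj; rewrite /= inordK.
  rewrite e in hPu.
  have [p _ /andP[hPp hne]] := oth u ord_max hu hPu.
  have [h1 h2 [q hq hid]] := left_sign hx hy (hS u hu) hPu hPp hne.
  have h3 : y p.2 < y ord_max.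
    by rewrite lt_def eq_sym h2 /= (incr_le hy) // -ltnS.
  rewrite /= in hid; clear -hid hq h1 h3 hpos; nra.
have [j [hj hQj hQj1]] := switch Q0 Ql.
set ja : 'I_l.+1 := inord j; set jb : 'I_l.+1 := inord j.+1.
have vja : val ja = j by rewrite /ja; apply: inordK; rewrite ltnS; exact: ltnW.
have vjb : val jb = j.+1 by rewrite /jb; apply: inordK; rewrite ltnS.
have hjab : y ja < y jb by apply: hy; rewrite vja vjb.
move: hQj => /andP[_ /hasP [A hA /andP[hPA hposA]]].
have /hasP [B hB hPB] := hcov ord0 jb.
have hnegB : dxdy B < 0.
  move: hQj1; rewrite /Q ltnS hj /= => /hasPn /(_ B hB).
  rewrite -/jb /P /= hPB /= -leNgt le_eqVlt => /orP[/eqP e|//].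
  by move: (hS B hB) => /andP[h1 h2]; move: e; rewrite /dxdy => /eqP;
    rewrite mulf_eq0 !subr_eq0 [B.2.1 == _]eq_sym [B.2.2 == _]eq_sym (negbTE h1) (negbTE h2).
have hAB : A != B by apply: contraTneq hposA => ->; rewrite -leNgt ltW.
have [pa hpa /andP[hPpa hnea]] := oth A ja hA hPA.
have [qb hqb /andP[hPqb hneb]] := oth B jb hB hPB.
have [a1 a2 [qa hqa ida]] := left_sign hx hy (hS A hA) hPA hPpa hnea.
have [b1 b2 [qb' hqb' idb]] := left_sign hx hy (hS B hB) hPB hPqb hneb.
have hYP : y jb <= y pa.2.
  have : y ja < y pa.2.
    have h : 0 < (x pa.1 - x ord0) * (y pa.2 - y ja) by rewrite ida mulr_gt0.
    by rewrite pmulr_rgt0 ?subr_gt0 // in h.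
  move/(incr_lt hy) => h; apply: (incr_le hy); by rewrite vjb -vja.
have hYQ : y qb.2 <= y ja.
  have : y qb.2 < y jb.
    have h : (x qb.1 - x ord0) * (y qb.2 - y jb) < 0 by rewrite idb pmulr_rlt0.
    by rewrite pmulr_rlt0 ?subr_gt0 // subr_lt0 in h.
  move/(incr_lt hy) => h; apply: (incr_le hy); by rewrite vja -ltnS -vjb.
have [sA [sB [hsA hsB ex ey]]] := cross2 a1 b1 hjab hYP hYQ.
have nA : (x ord0, y ja) != (x pa.1, y pa.2).
  by apply: contraNneq hnea => e; apply/eqP/(ptinj hx hy); rewrite -e.
have nB : (x ord0, y jb) != (x qb.1, y qb.2).
  by apply: contraNneq hneb => e; apply/eqP/(ptinj hx hy); rewrite -e.
have [onA endA] := seg_sub (hS A hA) hPA hPpa nA hsA.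
have [onB endB] := seg_sub (hS B hB) hPB hPqb nB hsB.
rewrite -ex -ey in onB endB.
have := nc_pair hnc hA hB hAB onA onB => /andP[/endA eA /endB eB].
have [w [hw hwA hwB]] : exists w, [/\ w \in Bs, P A w & P B w].
  have zB : exists2 w', P B w' & (x ord0 + sB * (x qb.1 - x ord0),
      y jb + sB * (y qb.2 - y jb)) = (x w'.1, y w'.2).
    case: eB => ->; [exists (ord0, jb) | exists qb] => //;
      by rewrite /= ?lin0 ?lin1.
  case: zB => w' hw'B; rewrite -ex -ey => ez.
  case: eA ez => -> ez.
  - exists (ord0, ja); split => //.
    move: ez; rewrite !lin0 => /(@ptinj _ _ _ x y (ord0, ja) w' hx hy) ->; exact: hw'B.
  - exists pa; split => //.
    move: ez; rewrite !lin1 => /(ptinj hx hy) ->; exact: hw'B.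
have := E2 w hw; rewrite leqNgt.
by rewrite (count2 (Q := P^~ w) hA hB hAB).
Qed.

Theorem lemma7 (R : realFieldType) (k l : nat) (x : 'I_k -> R) (y : 'I_l -> R)
    (S : seq (segment R)) :
  (1 <= k)%N -> (1 <= l)%N ->
  (forall i j : 'I_k, (i < j)%N -> x i < x j) ->
  (forall i j : 'I_l, (i < j)%N -> y i < y j) ->
  pairwise (fun u v => ~~ same_seg u v) S ->
  all (@non_axis R) S ->
  (forall (i : 'I_k) (j : 'I_l), exists2 u, u \in S & on_seg u (x i, y j)) ->
  (k + l - 2 <= size S)%N /\
  ((k = 1%N \/ l = 1%N \/ noncrossing S) -> (k + l - 1 <= size S)%N).
Proof.
move=> hk hl hx hy _ hna hcov.
case: k x hk hx hcov => [//|k] x _ hx hcov.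
case: l y hl hy hcov => [//|l] y _ hy hcov.
have hS : forall u, u \in S -> non_axis u by move=> u hu; exact: (allP hna u hu).
have hcov' : forall i j, has (fun u => onb u (x i, y j)) S.
  move=> i j; have [u hu ho] := hcov i j; apply/hasP; exists u => //.
  by apply/onbP => //; case/andP: (hS u hu).
have colb : (l.+1 <= size S)%N.
  have := @count_bound _ _ [set: 'I_l.+1] (fun u j => onb u (x ord0, y j)) S 1.
  rewrite cardsT card_ord mul1n; apply.
  - by move=> j _; exact: hcov'.
  - by move=> u hu; exact: col_one hy (hS u hu).
have rowb : (k.+1 <= size S)%N.
  have := @count_bound _ _ [set: 'I_k.+1] (fun u i => onb u (x i, y ord0)) S 1.
  rewrite cardsT card_ord mul1n; apply.
  - by move=> i _; exact: hcov'.
  - by move=> u hu; exact: row_one hx (hS u hu).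
have bndb : (0 < k)%N -> (0 < l)%N -> (k + l <= size S)%N.
  move=> kp lp.
  have H := @count_bound _ _ [set p : 'I_k.+1 * 'I_l.+1 | bnd p]
    (fun u p => onb u (x p.1, y p.2)) S 2.
  have cB := card_bnd kp lp.
  have := leq_trans cB (H (fun p _ => hcov' p.1 p.2)
     (fun u hu => two_bnd hx hy (hS u hu))).
  by rewrite leq_pmul2l.
split.
  case: (posnP k) => [k0|kp]; first lia.
  case: (posnP l) => [l0|lp]; first lia.
  have := bndb kp lp; lia.
case=> [e|[e|hnc]]; first lia; first lia.
case: (posnP k) => [k0|kp]; first lia.
case: (posnP l) => [l0|lp]; first lia.
rewrite leqNgt; apply/negP => h; apply: (nc_main kp lp hx hy hS hcov' hnc).
lia.
Qed.
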